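(* Let $G=A(n,\theta)$ with $n\ge3$ odd. No element of order $4$ in $G$ is conjugate to its inverse, and $G$ has exactly $2(2^n-1)$ conjugacy classes of elements of order $4$.
   Context: Let $n=2m+1$ be odd, $\mathbb{F}_{2^n}$ the field with $2^n$ elements, $\theta$ a generator of $\mathrm{Gal}(\mathbb{F}_{2^n}/\mathbb{F}_2)$, $a^\theta$ the image of $a$ under $\theta$. $G=A(n,\theta)$ is the group of matrices $\begin{bmatrix}1&a&b\\0&1&a^\theta\\0&0&1\end{bmatrix}$, $a,b\in\mathbb{F}_{2^n}$, denoted $(a,b)$, with $(a,b)(c,d)=(a+c,\,b+d+ac^\theta)$. *)

(* Defs.v *)
From HB Require Import structures.
From mathcomp Require Import all_boot all_order all_algebra all_fingroup all_field.
Set Implicit Arguments. Unset Strict Implicit. Unset Printing Implicit Defensive.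
Import GRing.Theory.
Local Open Scope ring_scope.

(* The 3x3 matrix [1 a b; 0 1 a^theta; 0 0 1], denoted (a,b) in the paper. *)
Definition A_mx (F : finFieldType) (theta : F -> F) (a b : F) : 'M[F]_3 :=
  \matrix_(i < 3, j < 3)
    if i == j then 1
    else if ((i : nat) == 0%N) && ((j : nat) == 1%N) then a
    else if ((i : nat) == 0%N) && ((j : nat) == 2%N) then b
    else if ((i : nat) == 1%N) && ((j : nat) == 2%N) then theta a
    else 0.

Definition A_grp (F : finFieldType) (theta : F -> F) : {set {'GL_3[F]}} :=
  [set g : {'GL_3[F]} | [exists a : F, exists b : F, GLval g == A_mx theta a b]].

(* theta generates Gal(F/F_2) (a cyclic group of order n): theta has order n. *)
Definition gal_generator (F : finFieldType) (n : nat) (theta : F -> F) : Prop :=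
  (forall x, iter n theta x = x) /\
  (forall k, (0 < k < n)%N -> exists x, iter k theta x != x).

(* Main.v *)
Require Import Defs.
From mathcomp Require Import all_boot all_order all_algebra all_fingroup all_solvable all_field.
From mathcomp Require Import ring.
Set Implicit Arguments. Unset Strict Implicit. Unset Printing Implicit Defensive.
Import GRing.Theory.
Local Open Scope ring_scope.

Definition pa (F : finFieldType) (g : {'GL_3[F]}) : F := GLval g (@Ordinal 3 0 isT) (@Ordinal 3 1 isT).
Definition pb (F : finFieldType) (g : {'GL_3[F]}) : F := GLval g (@Ordinal 3 0 isT) (@Ordinal 3 2 isT).

Lemma A_mxM (F : finFieldType) (theta : {rmorphism F -> F}) a b c d :
  A_mx theta a b *m A_mx theta c d = A_mx theta (a + c) (b + d + a * theta c).
Proof.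
apply/matrixP=> i j; rewrite !mxE !big_ord_recl big_ord0 !mxE.
case: i => [[|[|[|i]]] Hi] //; case: j => [[|[|[|j]]] Hj] //=;
rewrite /bump /= ?mxE /= ?rmorphD.
all: ring.
Qed.

Lemma A_mx00 (F : finFieldType) (theta : {rmorphism F -> F}) : A_mx theta 0 0 = 1%:M.
Proof.
apply/matrixP=> i j; rewrite !mxE.
by case: i => [[|[|[|i]]] Hi] //; case: j => [[|[|[|j]]] Hj] //=; rewrite ?rmorph0.
Qed.

Lemma inA_intro (F : finFieldType) (theta : {rmorphism F -> F}) (g : {'GL_3[F]}) a b :
  GLval g = A_mx theta a b -> [/\ g \in A_grp theta, pa g = a & pb g = b].
Proof.
move=> e; split; first by rewrite inE; apply/existsP; exists a; apply/existsP; exists b; rewrite e.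
  by rewrite /pa e mxE.
by rewrite /pb e mxE.
Qed.

Lemma inA (F : finFieldType) (theta : {rmorphism F -> F}) (g : {'GL_3[F]}) :
  g \in A_grp theta -> GLval g = A_mx theta (pa g) (pb g).
Proof.
rewrite inE => /existsP[a /existsP[b /eqP e]].
by have [_ -> ->] := inA_intro e.
Qed.

Lemma eqA (F : finFieldType) (theta : {rmorphism F -> F}) (x y : {'GL_3[F]}) :
  x \in A_grp theta -> y \in A_grp theta -> pa x = pa y -> pb x = pb y -> x = y.
Proof.
move=> /inA ex /inA ey e1 e2; apply: val_inj => /=.
by rewrite ex ey e1 e2.
Qed.

Lemma mulA (F : finFieldType) (theta : {rmorphism F -> F}) (x y : {'GL_3[F]}) :
  x \in A_grp theta -> y \in A_grp theta ->
  [/\ (x * y)%g \in A_grp theta, pa (x * y)%g = pa x + pa y &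
      pb (x * y)%g = pb x + pb y + pa x * theta (pa y)].
Proof.
move=> /inA ex /inA ey; apply: inA_intro.
by rewrite GL_MxE ex ey A_mxM.
Qed.

Lemma oneA (F : finFieldType) (theta : {rmorphism F -> F}) :
  [/\ (1 : {'GL_3[F]})%g \in A_grp theta, pa (1 : {'GL_3[F]})%g = 0 & pb (1 : {'GL_3[F]})%g = 0].
Proof. by apply: inA_intro; rewrite GL_1E A_mx00. Qed.

Lemma groupA (F : finFieldType) (theta : {rmorphism F -> F}) : group_set (A_grp theta).
Proof.
apply/group_setP; split; first by case: (oneA theta).
by move=> x y xA yA; case: (mulA xA yA).
Qed.

Lemma mkA (F : finFieldType) (theta : {rmorphism F -> F}) (a b : F) :
  2 \in [char F] -> exists g : {'GL_3[F]}, [/\ g \in A_grp theta, pa g = a & pb g = b].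
Proof.
move=> ch2.
have U : A_mx theta a b \in unitmx.
  have e : A_mx theta a b *m A_mx theta a (b + a * theta a) = 1%:M.
    by rewrite A_mxM addrr_pchar2 // addrA addrr_pchar2 // add0r addrr_pchar2 // A_mx00.
  by case: (mulmx1_unit e).
exists (insubd (1%g : {'GL_3[F]}) (A_mx theta a b)); apply: inA_intro.
exact: insubdK.
Qed.
Lemma sq_id01 (F : fieldType) (c : F) : c ^+ 2 = c -> c = 0 \/ c = 1.
Proof.
move=> h; have : c * (c - 1) = 0 by rewrite mulrBr mulr1 -expr2 h subrr.
by move/eqP; rewrite mulf_eq0 subr_eq0 => /orP[/eqP|/eqP]; [left|right].
Qed.

Lemma powq (F : finFieldType) n (x : F) m : #|F| = (2 ^ n)%N -> x ^+ (2 ^ (n * m)) = x.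
Proof.
move=> hF; elim: m => [|m IH]; first by rewrite muln0 expr1.
by rewrite mulnS expnD exprM -hF expf_card IH.
Qed.

Lemma prim_elt (F : finFieldType) :
  exists z : F, forall x : F, x != 0 -> exists m, x = z ^+ m.
Proof.
have hq : (0 < #|F|.-1)%N by rewrite -subn1 subn_gt0; exact: finNzRing_gt1.
have U (x : F) : x != 0 -> x ^+ #|F|.-1 = 1.
  move=> nx; apply: (mulfI nx); rewrite mulr1 -exprS prednK; last by apply: ltnW; rewrite -subn1 subn_gt0 in hq.
  exact: expf_card.
have hall : all (#|F|.-1).-unity_root (enum [set~ (0:F)%R]).
  apply/allP=> x; rewrite mem_enum in_setC1 => nx; by rewrite unity_rootE U.
have hsz : (#|F|.-1 <= size (enum [set~ (0:F)%R]))%N by rewrite -cardE cardsC1.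
have /hasP[z _ pz] := @has_prim_root F #|F|.-1 (enum [set~ (0:F)%R]) hq hall (enum_uniq _) hsz.
 exists z => x nx; have [i ->] := prim_rootP pz (U x nx); by exists i.
Qed.

Lemma fix01 (F : finFieldType) n (theta : {rmorphism F -> F}) :
  #|F| = (2 ^ n)%N -> gal_generator n theta ->
  forall u, theta u = u -> u = 0 \/ u = 1.
Proof.
move=> hF [gid gnid] u hu.
have n0 : (0 < n)%N.
  case: n hF {gid gnid} => // hF; have := finNzRing_gt1 F; by rewrite hF.
have ch2 : 2 \in [char F] by apply: (card_finPcharP hF).
have [z hz] := prim_elt F.
have [i hi] : exists i, theta z = z ^+ (2 ^ i).
  pose h (i : nat) : {poly F} := 'X - (z ^+ (2 ^ i))%:P.
  pose P := \prod_(i < n) h i.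
  have Pfr : map_poly (Frobenius_aut ch2) P = P.
    have hk (k : nat) : map_poly (Frobenius_aut ch2) (h k) = h k.+1.
      rewrite /h map_polyXsubC expnSr exprM; congr (_ - _%:P); exact: pFrobenius_autE.
    rewrite /P rmorph_prod.
    rewrite (eq_bigr (fun k : ordinal n => h k.+1)); last by move=> k _; exact: hk.
    case: n n0 hF {gid gnid P} => // n' _ hF.
    rewrite big_ord_recr big_ord_recl /= mulrC; congr (_ * _).
      by rewrite /h -hF expf_card expn0 expr1.
  have Pc : forall x, x \in (P : seq F) -> theta x = x.
    move=> x xP; have := nth_index 0 xP; set k := index x P => <-.
    have : (map_poly (Frobenius_aut ch2) P)`_k = P`_k by rewrite Pfr.
    rewrite coef_map /= pFrobenius_autE => /sq_id01 [->|->]; by rewrite ?rmorph0 ?rmorph1.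
  have Pz : P.[z] = 0.
    rewrite /P horner_prod; apply/eqP/prodf_eq0; exists (Ordinal n0) => //.
    by rewrite /h !hornerE expn0 expr1 subrr.
  have : P.[theta z] = 0 by rewrite -{1}(map_poly_id Pc) horner_map Pz rmorph0.
  rewrite /P horner_prod => /eqP/prodf_eq0 [k _].
  rewrite /h !hornerE subr_eq0 => /eqP ->; by exists k.
have th x : theta x = x ^+ (2 ^ i).
  have [->|nx] := eqVneq x 0; first by rewrite rmorph0 expr0n expn_eq0.
  have [m ->] := hz x nx; by rewrite rmorphXn hi exprAC.
have itth k x : iter k theta x = x ^+ (2 ^ (i * k)).
  elim: k => [|k IH]; first by rewrite muln0 expr1.
  by rewrite iterS IH th -exprM -expnD mulnS addnC.
have d1 : gcdn i n = 1%N.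
  set d := gcdn i n.
  have d0 : (0 < d)%N by rewrite gcdn_gt0 n0 orbT.
  have dn : (d %| n)%N by apply: dvdn_gcdr.
  have di : (d %| i)%N by apply: dvdn_gcdl.
  case: (ltngtP d 1) => //; first by rewrite ltnS leqn0 => /eqP d00; rewrite d00 in d0.
  move=> d1.
  have nd0 : (0 < n %/ d)%N by rewrite divn_gt0 // dvdn_leq.
  have ndn : (n %/ d < n)%N by rewrite ltn_Pdiv.
  have [x hx] := gnid (n %/ d)%N (introT andP (conj nd0 ndn)).
  move: hx; rewrite itth.
  have -> : (i * (n %/ d) = n * (i %/ d))%N.
    exact: muln_divCA.
  by rewrite powq // eqxx.
have [a _ ha] := Bezoutl i n0.
rewrite gcdnC d1 in ha.
have ua : u ^+ (2 ^ (i * a)) = u.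
  by rewrite -itth; elim: a {ha} => //= a ->.
apply: sq_id01.
have e : (1 + a * i = n * ((1 + a * i) %/ n))%N by rewrite [RHS]mulnC divnK.
rewrite -{2}(powq u ((1 + a * i) %/ n) hF) -e expnD expn1 exprM exprAC mulnC ua //.
Qed.

Lemma solve2 (F : finFieldType) (x y z : F) : 2 \in [char F] -> x + z = y -> x = y + z.
Proof. by move=> ch2 <-; rewrite -addrA addrr_pchar2 // addr0. Qed.

Definition mkG (F : finFieldType) (theta : {rmorphism F -> F}) (p : F * F) : {'GL_3[F]} :=
  insubd (1%g : {'GL_3[F]}) (A_mx theta p.1 p.2).

Lemma mkG_spec (F : finFieldType) (theta : {rmorphism F -> F}) (p : F * F) :
  2 \in [char F] -> [/\ mkG theta p \in A_grp theta, pa (mkG theta p) = p.1 & pb (mkG theta p) = p.2].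
Proof.
move=> ch2; case: p => a b /=.
have U : A_mx theta a b \in unitmx.
  have e : A_mx theta a b *m A_mx theta a (b + a * theta a) = 1%:M.
    by rewrite A_mxM addrr_pchar2 // addrA addrr_pchar2 // add0r addrr_pchar2 // A_mx00.
  by case: (mulmx1_unit e).
apply: inA_intro; exact: insubdK.
Qed.

Lemma mkG_inj (F : finFieldType) (theta : {rmorphism F -> F}) :
  2 \in [char F] -> injective (mkG theta).
Proof.
move=> ch2 [a b] [c d] e.
have [_ h1 h2] := mkG_spec theta (a, b) ch2; have [_ h3 h4] := mkG_spec theta (c, d) ch2.
by rewrite e h3 h4 in h1 h2; rewrite /= in h1 h2; rewrite h1 h2.
Qed.

Lemma mkG_pa (F : finFieldType) (theta : {rmorphism F -> F}) (g : {'GL_3[F]}) :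
  2 \in [char F] -> g \in A_grp theta -> g = mkG theta (pa g, pb g).
Proof.
move=> ch2 gA; have [h1 h2 h3] := mkG_spec theta (pa g, pb g) ch2.
by apply: eqA gA h1 _ _; rewrite ?h2 ?h3.
Qed.

Lemma imA (F : finFieldType) (theta : {rmorphism F -> F}) (S : {set F * F}) (g : {'GL_3[F]}) :
  2 \in [char F] -> (g \in mkG theta @: S) = (g \in A_grp theta) && ((pa g, pb g) \in S).
Proof.
move=> ch2; apply/imsetP/andP.
  case=> p pS ->; have [h1 h2 h3] := mkG_spec theta p ch2; split => //.
  by rewrite h2 h3 -surjective_pairing.
by case=> gA pS; exists (pa g, pb g) => //; exact: mkG_pa.
Qed.

Lemma sqA (F : finFieldType) (theta : {rmorphism F -> F}) (x : {'GL_3[F]}) :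
  2 \in [char F] -> x \in A_grp theta ->
  [/\ (x ^+ 2)%g \in A_grp theta, pa (x ^+ 2)%g = 0 & pb (x ^+ 2)%g = pa x * theta (pa x)].
Proof.
move=> ch2 xA; rewrite expgS expg1; have [h1 h2 h3] := mulA xA xA.
by rewrite h2 h3 !addrr_pchar2 // add0r.
Qed.

Lemma sq0A (F : finFieldType) (theta : {rmorphism F -> F}) (x : {'GL_3[F]}) :
  2 \in [char F] -> x \in A_grp theta -> pa x = 0 -> (x ^+ 2)%g = 1%g.
Proof.
move=> ch2 xA h; have [h1 h2 h3] := sqA ch2 xA; have [o1 o2 o3] := oneA theta.
by apply: eqA h1 o1 _ _; rewrite ?h2 ?h3 ?o2 ?o3 // h mul0r.
Qed.

Lemma orderA (F : finFieldType) (theta : {rmorphism F -> F}) (x : {'GL_3[F]}) :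
  2 \in [char F] -> x \in A_grp theta -> (#[x]%g == 4%N) = (pa x != 0).
Proof.
move=> ch2 xA; have [h1 h2 h3] := sqA ch2 xA.
case: (eqVneq (pa x) 0) => [e0|nx].
  have := sq0A ch2 xA e0 => /eqP; rewrite -order_dvdn => d2.
  apply/eqP => e; move: d2; by rewrite e.
have e4 : (x ^+ 4)%g = 1%g by rewrite (expgM x 2 2) (sq0A ch2 h1 h2).
have n2 : (x ^+ 2)%g != 1%g.
  apply/eqP => e; have [o1 o2 o3] := oneA theta.
  move: h3; rewrite e o3 => /esym/eqP; by rewrite mulf_eq0 fmorph_eq0 orbb (negbTE nx).
have d4 : (#[x]%g %| 4)%N by rewrite order_dvdn e4.
have d2 : ~~ (#[x]%g %| 2)%N by rewrite order_dvdn.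
have l4 := @dvdn_leq _ 4 isT d4; move: l4 (order_gt0 x) d4 d2.
by case: #[x]%g => [|[|[|[|[|k]]]]].
Qed.

Lemma invA (F : finFieldType) (theta : {rmorphism F -> F}) (x : {'GL_3[F]}) :
  2 \in [char F] -> x \in A_grp theta ->
  [/\ (x^-1)%g \in A_grp theta, pa (x^-1)%g = pa x & pb (x^-1)%g = pb x + pa x * theta (pa x)].
Proof.
move=> ch2 xA; have gA := groupA theta; pose G := Group gA.
have xiA : (x^-1)%g \in G by rewrite groupV.
have [h1 h2 h3] := mulA xA xiA; have [o1 o2 o3] := oneA theta.
rewrite mulgV o2 o3 in h2 h3.
have ea : pa x^-1 = pa x.
  by rewrite -[pa x]add0r; apply: solve2 => //; rewrite addrC.
split => //; rewrite ea in h3.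
apply: solve2 => //; rewrite -[pb x]add0r; apply: solve2 => //.
by rewrite addrC addrA.
Qed.

Lemma conjA (F : finFieldType) (theta : {rmorphism F -> F}) (x y : {'GL_3[F]}) :
  2 \in [char F] -> x \in A_grp theta -> y \in A_grp theta ->
  [/\ (x ^ y)%g \in A_grp theta, pa (x ^ y)%g = pa x &
     pb (x ^ y)%g = pb x + pa x * theta (pa y) + pa y * theta (pa x)].
Proof.
move=> ch2 xA yA; have gA := groupA theta; pose G := Group gA.
have xyA : (x ^ y)%g \in G by rewrite groupJ.
have e := conjgC x y.
have [h1 h2 h3] := mulA xA yA; have [k1 k2 k3] := mulA yA xyA.
rewrite e k2 in h2; rewrite e k3 in h3.
have ea : pa (x ^ y)%g = pa x by apply: (@addrI _ (pa y)); rewrite h2 addrC.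
split => //; rewrite ea in h3.
apply: solve2 => //.
have -> : pb (x ^ y)%g + pa y * theta (pa x) = (pb y + pb (x ^ y)%g + pa y * theta (pa x)) + pb y.
  by rewrite (addrC (pb y)) -!addrA; congr (_ + _); rewrite addrC -addrA addrr_pchar2 // addr0.
rewrite h3.
have E : forall p q r : F, p + q + r + q = p + r + (q + q) by move=> *; ring.
by rewrite E addrr_pchar2 // addr0.
Qed.

Lemma commA (F : finFieldType) (theta : {rmorphism F -> F}) (x y : {'GL_3[F]}) :
  2 \in [char F] -> x \in A_grp theta -> y \in A_grp theta ->
  (y \in 'C[x])%g = (pa y * theta (pa x) == pa x * theta (pa y)).
Proof.
move=> ch2 xA yA; have [h1 h2 h3] := mulA xA yA; have [k1 k2 k3] := mulA yA xA.
apply/idP/idP => [/cent1P e | /eqP e].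
  apply/eqP; move: k3; rewrite /commute in e; rewrite e h3 (addrC (pb y)) -!addrA => /addrI /addrI; done.
apply/cent1P; rewrite /commute; apply: eqA k1 h1 _ _; first by rewrite k2 h2 addrC.
by rewrite k3 h3 e; congr (_ + _); exact: addrC.
Qed.

Theorem lemma3p1 (F : finFieldType) (n : nat) (theta : {rmorphism F -> F}) :
  odd n -> (3 <= n)%N -> #|F| = (2 ^ n)%N -> gal_generator n theta ->
  (forall x, x \in A_grp theta -> #[x]%g = 4%N -> (x^-1)%g \notin (x ^: A_grp theta)%g) /\
  #|[set (x ^: A_grp theta)%g | x in A_grp theta & #[x]%g == 4%N]| = (2 * (2 ^ n - 1))%N.
Proof.
move=> nodd n3 hF gg.
have ch2 : 2 \in [char F] by apply: (card_finPcharP hF).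
have gA := groupA theta; pose G := Group gA.
have n0 : (0 < n)%N by apply: leq_trans n3.
have hfix := fix01 hF gg.
split.
  move=> x xA o4.
  have nx : pa x != 0 by rewrite -(orderA ch2 xA) o4.
  apply/negP => /imsetP [y yA e].
  have [i1 i2 i3] := invA ch2 xA.
  have [c1 c2 c3] := conjA ch2 xA yA.
  rewrite -e i3 -!addrA in c3; move/addrI: c3 => c3.
  have tha : theta (pa x) != 0 by rewrite fmorph_eq0.
  pose u := pa y / pa x.
  have hu : theta u + u = 1.
    apply: (mulfI (mulf_neq0 nx tha)); rewrite mulr1 [RHS]c3 /u fmorph_div.
    by field; rewrite nx tha.
  have tu : theta u = 1 + u by apply: solve2.
  have it : forall k, iter k theta u = u + (odd k)%:R.
    elim=> [|k IH]; first by rewrite addr0.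
    rewrite iterS IH rmorphD rmorph_nat tu.
    rewrite [odd k.+1]/=; case: (odd k) => /=.
      by rewrite addr0 (addrC 1 u) -addrA addrr_pchar2 // addr0.
    by rewrite !addr0 addrC.
  have := it n; rewrite gg.1 nodd /= => /(congr1 (fun t => t - u)).
  rewrite subrr addrC addKr => /esym/eqP; by rewrite oner_eq0.
set P := [set (x ^: A_grp theta)%g | x in A_grp theta & #[x]%g == 4%N].
set S := [set x in A_grp theta | #[x]%g == 4%N].
have cardA : #|A_grp theta| = (#|F| * #|F|)%N.
  have -> : A_grp theta = mkG theta @: [set: F * F].
    by apply/setP => g; rewrite imA // in_setT andbT.
  by rewrite card_imset ?cardsT ?card_prod //; exact: mkG_inj.
have cardS : #|S| = (#|F|.-1 * #|F|)%N.
  have -> : S = mkG theta @: setX [set~ 0] [set: F].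
    apply/setP => g; rewrite imA // in_setX in_setC1 in_setT andbT /S in_set.
    by case gA': (g \in A_grp theta) => //=; rewrite (orderA ch2 gA').
  by rewrite card_imset ?cardsX ?cardsC1 ?cardsT //; exact: mkG_inj.
have cls : forall x, x \in A_grp theta -> pa x != 0 -> #|(x ^: A_grp theta)%g| = (2 ^ n.-1)%N.
  move=> x xA nx.
  have cC : 'C_G[x]%g = mkG theta @: setX [set 0; pa x] [set: F].
    apply/setP => g; rewrite imA // in_setX in_setT andbT in_setI in_set2.
    change (g \in G) with (g \in A_grp theta).
    case gA': (g \in A_grp theta) => //=; rewrite (commA ch2 xA gA').
    apply/eqP/orP => [e | [/eqP -> | /eqP ->]]; last by [].
      have [e0|nz] := eqVneq (pa g) 0; first by left.
      right.
      have tha : theta (pa x) != 0 by rewrite fmorph_eq0.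
      have hu : theta (pa g / pa x) = pa g / pa x.
        rewrite fmorph_div; apply/eqP; rewrite eqr_div // e mulrC //.
      case: (hfix _ hu) => [/eqP|/divr1_eq ->]; last by [].
      by rewrite mulf_eq0 invr_eq0 (negbTE nx) (negbTE nz).
    by rewrite rmorph0 mulr0 mul0r.
  have cardC : #|'C_G[x]%g| = (2 * #|F|)%N.
    by rewrite cC card_imset ?cardsX ?cards2 ?cardsT ?(eq_sym 0) ?nx //; exact: mkG_inj.
  have L := Lagrange (subsetIl G 'C[x]%g); rewrite index_cent1 cardC in L.
  move: L; rewrite /= cardA hF.
  case: n n0 {n3 nodd hF gg hfix cardS cardA} => // m _ /=.
  rewrite expnS -!mulnA => /eqP; rewrite eqn_pmul2l // => /eqP.
  by rewrite mulnCA => /eqP; rewrite eqn_pmul2l ?expn_gt0 // eqn_pmul2l // => /eqP.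
have part : partition P S.
  apply/and3P; split.
  - apply/eqP/setP => y; apply/bigcupP/idP.
      case=> B /imsetP [x]; rewrite inE => /andP [xA o4] -> /imsetP [z zA ->].
      by rewrite inE (@groupJ _ G) //= orderJ.
    rewrite inE => /andP [yA o4]; exists (y ^: A_grp theta)%g; last exact: (class_refl G y).
    by apply: imset_f; rewrite inE yA.
  - apply: (@trivIsetS _ _ (classes G)); last by case/and3P: (classes_partition G).
    apply/subsetP => B /imsetP [x]; rewrite inE => /andP[xA _] ->; exact: imset_f.
  - apply/negP => /imsetP [x _ e]; have := class_refl G x; by rewrite /= -e inE.
have := card_partition part.
rewrite cardS (eq_bigr (fun _ => 2 ^ n.-1)%N) ?sum_nat_const; last first.
  move=> B /imsetP [x]; rewrite inE => /andP[xA o4] ->; apply: cls => //; by rewrite -(orderA ch2 xA).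
rewrite hF; case: n n0 {n3 nodd hF gg hfix cardS cardA cls part} => // m _ /=.
rewrite expnS mulnA => /eqP; rewrite eqn_pmul2r ?expn_gt0 // => /eqP <-.
by rewrite subn1 mulnC.
Qed.
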